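(* Let $\mathfrak{g}$ be a finite-dimensional real Lie algebra and, for a fixed sign $\pm$, let $\mathbf{M}_{\pm}\colon T^{*}\mathfrak{g} = \mathfrak{g}\times\mathfrak{g}^{*}\to\mathfrak{g}^{*}$ be $\mathbf{M}_{\pm}(q,p) = \mp\operatorname{ad}_{q}^{*}p$. If the center $\mathfrak{z}(\mathfrak{g}) = \{ z\in\mathfrak{g} : [z,x]=0 \ \forall x\in\mathfrak{g}\}$ is nontrivial, then $\mathbf{M}_{\pm}(T^{*}\mathfrak{g}) \subsetneq \mathfrak{g}^{*}$. Equivalently, a necessary condition for $\mathbf{M}_{\pm}(T^{*}\mathfrak{g}) = \mathfrak{g}^{*}$ is that $\mathfrak{z}(\mathfrak{g}) = \{0\}$.
   Context: $\operatorname{ad}_{x}^{*}\colon\mathfrak{g}^{*}\to\mathfrak{g}^{*}$ is the dual of $\operatorname{ad}_{x} = [x,\cdot\,]$, i.e. $\langle \operatorname{ad}_{x}^{*}\alpha, y\rangle = \langle \alpha, [x,y]\rangle$, with $\langle\cdot,\cdot\rangle$ the natural pairing of $\mathfrak{g}^{*}$ and $\mathfrak{g}$. *)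

(* Defs.v *)
From HB Require Import structures.
From mathcomp Require Import all_boot all_order all_algebra.
From mathcomp Require Import reals.
Set Implicit Arguments. Unset Strict Implicit. Unset Printing Implicit Defensive.
Import GRing.Theory Num.Theory.
Local Open Scope ring_scope.

Section LieDefs.
Variables (R : realType) (n : nat).
Notation V := 'rV[R]_n.

Definition is_lie_bracket (br : V -> V -> V) : Prop :=
  [/\ (forall (a : R) (x y z : V), br (a *: x + y) z = a *: br x z + br y z),
      (forall (a : R) (x y z : V), br z (a *: x + y) = a *: br z x + br z y),
      (forall x : V, br x x = 0)
    & (forall x y z : V, br x (br y z) + br y (br z x) + br z (br x y) = 0)].

Definition is_dual (alpha : V -> R) : Prop :=
  forall (a : R) (x y : V), alpha (a *: x + y) = a * alpha x + alpha y.

Definition ad_star (br : V -> V -> V) (x : V) (alpha : V -> R) : V -> R :=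
  fun y => alpha (br x y).

(* M_{+-}(q,p) = -+ ad^*_q p ; sgn = true stands for "+", i.e. M_+ = - ad^* *)
Definition Mpm (br : V -> V -> V) (sgn : bool) (q : V) (p : V -> R) : V -> R :=
  fun y => (if sgn then -1 else 1) * ad_star br q p y.

Definition lie_center (br : V -> V -> V) (z : V) : Prop :=
  forall x : V, br z x = 0.
End LieDefs.

(* Main.v *)
Require Import Defs.
From HB Require Import structures.
From mathcomp Require Import all_boot all_order all_algebra.
From mathcomp Require Import reals.
Import GRing.Theory Num.Theory.
Local Open Scope ring_scope.

Theorem proposition4p1 (R : realType) (n : nat)
    (br : 'rV[R]_n -> 'rV[R]_n -> 'rV[R]_n) (sgn : bool) :
  is_lie_bracket br ->
  (exists z : 'rV[R]_n, z != 0 /\ lie_center br z) ->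
  (forall (q : 'rV[R]_n) (p : 'rV[R]_n -> R),
      is_dual p -> is_dual (Mpm br sgn q p)) /\
  (exists alpha : 'rV[R]_n -> R, is_dual alpha /\
     ~ exists (q : 'rV[R]_n) (p : 'rV[R]_n -> R),
         is_dual p /\ forall y, Mpm br sgn q p y = alpha y).
Proof.
move=> [Hl Hr Hxx _] [z [nz Hz]].
split.
  move=> q p Hp a x y; rewrite /Mpm /ad_star Hr Hp.
  by rewrite mulrDr mulrCA.
have [i Hi] : exists i, z 0 i != 0.
  apply/existsP; move: nz; apply: contraR; rewrite negb_exists => /forallP H.
  apply/eqP/rowP => j; rewrite mxE; move: (H j); rewrite negbK.
  by move/eqP.
exists (fun x => x 0 i); split.
  by move=> a x y; rewrite !mxE.
move=> [q [p [Hp Hq]]].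
have p0 : p 0 = 0.
  have := Hp 1 0 0; rewrite scale1r addr0 mul1r => /eqP.
  by rewrite -subr_eq0 opprD addrA subrr sub0r oppr_eq0 => /eqP.
have bqz : br q z = 0.
  have bl x y w : br (x + y) w = br x w + br y w.
    by rewrite -{1}[x]scale1r Hl scale1r.
  have brr x y w : br w (x + y) = br w x + br w y.
    by rewrite -{1}[x]scale1r Hr scale1r.
  have := Hxx (q + z); rewrite bl !brr !Hxx Hz.
  by rewrite add0r !addr0.
move: (Hq z); rewrite /Mpm /ad_star bqz p0 mulr0 => E.
by move: Hi; rewrite -E eqxx.
Qed.
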